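(* Let $f:\mathbb{S}^2\times\mathbb{R}\to\mathbb{S}^2\times\mathbb{R}$ be a geodesic-preserving bijection. Then $f$ maps horizontal geodesics to horizontal geodesics, vertical geodesics to vertical geodesics, and slant geodesics to slant geodesics.
   Context: $\mathbb{S}^2\times\mathbb{R}$ has the Riemannian product metric of the round unit sphere and the real line. A geodesic is the image of a locally isometric immersion of the whole real line; a bijection (not assumed continuous) is geodesic-preserving if it maps every geodesic onto a geodesic as a set. A geodesic is vertical if it equals $\{p\}\times\mathbb{R}$, horizontal if it is contained in some $\mathbb{S}^2\times\{r\}$ (a great circle), and slant otherwise. *)

(* Defs.v *)
From Stdlib Require Import Reals.
Open Scope R_scope.

Record S2 : Type := mkS2 {
  s2x : R; s2y : R; s2z : R;
  s2_unit : s2x * s2x + s2y * s2y + s2z * s2z = 1 }.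

Definition M : Type := (S2 * R)%type.

Definition s2dot (p q : S2) : R :=
  s2x p * s2x q + s2y p * s2y q + s2z p * s2z q.

Definition dS2 (p q : S2) : R := acos (s2dot p q).

Definition distM (x y : M) : R :=
  sqrt (dS2 (fst x) (fst y) ^ 2 + (snd x - snd y) ^ 2).

Definition locally_isometric (c : R -> M) : Prop :=
  forall t : R, exists eps : R, 0 < eps /\
    forall s u : R, Rabs (s - t) < eps -> Rabs (u - t) < eps ->
      distM (c s) (c u) = Rabs (s - u).

Definition geodesic (G : M -> Prop) : Prop :=
  exists c : R -> M, locally_isometric c /\
    forall x : M, G x <-> exists t : R, c t = x.

Definition vertical (G : M -> Prop) : Prop :=
  exists p : S2, forall x : M, G x <-> fst x = p.

Definition horizontal (G : M -> Prop) : Prop :=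
  geodesic G /\ exists r : R, forall x : M, G x -> snd x = r.

Definition slant (G : M -> Prop) : Prop :=
  geodesic G /\ ~ vertical G /\ ~ horizontal G.

Definition image (f : M -> M) (G : M -> Prop) : M -> Prop :=
  fun y => exists x, G x /\ f x = y.

Definition bijection (f : M -> M) : Prop :=
  exists g : M -> M, (forall x, g (f x) = x) /\ (forall y, f (g y) = y).

Definition geodesic_preserving (f : M -> M) : Prop :=
  forall G, geodesic G -> geodesic (image f G).

(* Main.v *)
Require Import Defs.
From Stdlib Require Import Reals Lra Lia Psatz Classical ProofIrrelevance.
From Coquelicot Require Import Coquelicot.
Open Scope R_scope.

Lemma cauchy3 a1 a2 a3 b1 b2 b3 :
  (a1*b1+a2*b2+a3*b3)^2 <= (a1*a1+a2*a2+a3*a3)*(b1*b1+b2*b2+b3*b3).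
Proof.
  assert (E: (a1*a1+a2*a2+a3*a3)*(b1*b1+b2*b2+b3*b3) - (a1*b1+a2*b2+a3*b3)^2
    = (a1*b2-a2*b1)^2 + (a1*b3-a3*b1)^2 + (a2*b3-a3*b2)^2) by ring.
  assert (0 <= (a1*b2-a2*b1)^2 + (a1*b3-a3*b1)^2 + (a2*b3-a3*b2)^2) by
    (repeat apply Rplus_le_le_0_compat; apply pow2_ge_0).
  lra.
Qed.

Lemma s2dot_bound p q : -1 <= s2dot p q <= 1.
Proof.
  destruct p as [x1 y1 z1 H1], q as [x2 y2 z2 H2]; unfold s2dot; simpl.
  pose proof (pow2_ge_0 (x1-x2)). pose proof (pow2_ge_0 (y1-y2)). pose proof (pow2_ge_0 (z1-z2)).
  pose proof (pow2_ge_0 (x1+x2)). pose proof (pow2_ge_0 (y1+y2)). pose proof (pow2_ge_0 (z1+z2)).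
  split; nra.
Qed.

Lemma s2dot_comm p q : s2dot p q = s2dot q p.
Proof. unfold s2dot; ring. Qed.

Lemma s2dot_self p : s2dot p p = 1.
Proof. destruct p; unfold s2dot; simpl; lra. Qed.

Lemma neg_sqrt_le x a b : 0 <= a -> 0 <= b -> x^2 <= a*b -> - (sqrt a * sqrt b) <= x.
Proof.
  intros Ha Hb H.
  rewrite <- sqrt_mult by lra.
  assert (Rabs x <= sqrt (a*b)).
  { rewrite <- sqrt_Rsqr_abs. apply sqrt_le_1_alt. unfold Rsqr. lra. }
  pose proof (Rabs_maj2 x). lra.
Qed.

Lemma sph_tri p q r : acos (s2dot p r) <= acos (s2dot p q) + acos (s2dot q r).
Proof.
  pose proof (acos_bound (s2dot p q)) as HA. pose proof (acos_bound (s2dot q r)) as HB.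
  pose proof (acos_bound (s2dot p r)) as HC.
  set (A := acos (s2dot p q)) in *. set (B := acos (s2dot q r)) in *.
  destruct (Rle_lt_dec PI (A+B)) as [Hs|Hs]; [lra|].
  assert (Hcos : cos (A+B) <= s2dot p r).
  { rewrite cos_plus. unfold A, B.
    pose proof (s2dot_bound p q). pose proof (s2dot_bound q r).
    rewrite !cos_acos by lra. rewrite !sin_acos by lra.
    destruct p as [x1 y1 z1 H1], q as [x2 y2 z2 H2], r as [x3 y3 z3 H3]; unfold s2dot in *; simpl in *.
    set (d := x1*x2+y1*y2+z1*z2) in *. set (e := x2*x3+y2*y3+z2*z3) in *.
    pose proof (cauchy3 (x1 - d*x2) (y1 - d*y2) (z1 - d*z2) (x3 - e*x2) (y3 - e*y2) (z3 - e*z2)) as C.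
    assert (E1 : (x1 - d*x2)*(x1 - d*x2)+(y1 - d*y2)*(y1 - d*y2)+(z1 - d*z2)*(z1 - d*z2) = 1 - d²).
    { unfold Rsqr. transitivity ((x1*x1+y1*y1+z1*z1) - 2*d*(x1*x2+y1*y2+z1*z2) + d*d*(x2*x2+y2*y2+z2*z2)); [ring|].
      rewrite H1, H2. fold d. ring. }
    assert (E2 : (x3 - e*x2)*(x3 - e*x2)+(y3 - e*y2)*(y3 - e*y2)+(z3 - e*z2)*(z3 - e*z2) = 1 - e²).
    { unfold Rsqr. transitivity ((x3*x3+y3*y3+z3*z3) - 2*e*(x2*x3+y2*y3+z2*z3) + e*e*(x2*x2+y2*y2+z2*z2)); [ring|].
      rewrite H3, H2. fold e. ring. }
    assert (E3 : (x1 - d*x2)*(x3 - e*x2)+(y1 - d*y2)*(y3 - e*y2)+(z1 - d*z2)*(z3 - e*z2)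
       = (x1*x3+y1*y3+z1*z3) - d*e).
    { transitivity ((x1*x3+y1*y3+z1*z3) - d*(x2*x3+y2*y3+z2*z3) - e*(x1*x2+y1*y2+z1*z2) + d*e*(x2*x2+y2*y2+z2*z2)); [ring|].
      rewrite H2. fold d e. ring. }
    rewrite E1, E2, E3 in C.
    assert (Hd : 0 <= 1 - d²) by (unfold Rsqr; nra).
    assert (He : 0 <= 1 - e²) by (unfold Rsqr; nra).
    pose proof (neg_sqrt_le _ _ _ Hd He C). lra. }
  destruct (Rle_lt_dec (acos (s2dot p r)) (A+B)) as [Hle|Hlt]; [exact Hle|].
  exfalso.
  assert (cos (acos (s2dot p r)) < cos (A+B)) by (apply cos_decreasing_1; lra).
  rewrite cos_acos in H by (apply s2dot_bound). lra.
Qed.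

Lemma locally_of (P : R -> Prop) t e : 0 < e -> (forall s, Rabs (s - t) < e -> P s) -> locally t P.
Proof.
  intros He H. exists (mkposreal e He). intros y Hy. apply H.
  unfold ball in Hy; simpl in Hy. unfold AbsRing_ball, abs, minus, plus, opp in Hy. simpl in Hy. exact Hy.
Qed.

Lemma loc_const (g : R -> R) :
  (forall t, exists e, 0 < e /\ forall s, Rabs (s - t) < e -> g s = g t) -> forall x y, g x = g y.
Proof.
  intros H.
  assert (D : forall t, is_derive g t 0).
  { intro t. destruct (H t) as [e [He Hs]].
    apply (is_derive_ext_loc (fun _ => g t)).
    - apply (locally_of _ t e He). intros s Hs'. symmetry. apply Hs; auto.
    - auto_derive; auto. }
  assert (K : forall x y, x < y -> g x = g y).
  { intros x y Hxy. apply (eq_is_derive g x y); auto. }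
  intros x y. destruct (Rtotal_order x y) as [h|[h|h]]; [auto| subst; auto| symmetry; auto].
Qed.

Lemma loc_affine_glob (h : R -> R) :
  (forall t0, exists e, 0 < e /\ exists k m, forall t, Rabs (t - t0) < e -> h t = k*t+m) ->
  forall t, h t = Derive h 0 * t + h 0.
Proof.
  intros H.
  assert (D1 : forall t0, exists e, 0 < e /\ forall t, Rabs (t - t0) < e -> Derive h t = Derive h t0 /\ h t = Derive h t0 * t + (h t0 - Derive h t0 * t0)).
  { intro t0. destruct (H t0) as [e [He [k [m Hk]]]].
    assert (Dk : forall t, Rabs (t - t0) < e -> Derive h t = k).
    { intros t Ht. apply is_derive_unique.
      apply (is_derive_ext_loc (fun t => k*t+m)).
      - apply (locally_of _ t (e - Rabs (t - t0))). lra.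
        intros s Hs. symmetry. apply Hk.
        pose proof (Rabs_triang (s - t) (t - t0)). replace (s - t + (t - t0)) with (s - t0) in H0 by ring. lra.
      - auto_derive; auto; ring. }
    exists e; split; auto. intros t Ht.
    rewrite (Dk t Ht), (Dk t0) by (rewrite Rminus_diag, Rabs_R0; auto).
    split; auto. rewrite (Hk t Ht), (Hk t0) by (rewrite Rminus_diag, Rabs_R0; auto). ring. }
  assert (C : forall x y, Derive h x = Derive h y).
  { apply loc_const. intro t0. destruct (D1 t0) as [e [He Hs]]. exists e; split; auto.
    intros s Hs'. apply (Hs s Hs'). }
  assert (C2 : forall x y, h x - Derive h 0 * x = h y - Derive h 0 * y).
  { apply (loc_const (fun x => h x - Derive h 0 * x)). intro t0. destruct (D1 t0) as [e [He Hs]].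
    exists e; split; auto. intros s Hs'. destruct (Hs s Hs') as [_ E]. rewrite E.
    rewrite (C t0 0). ring. }
  intro t. specialize (C2 t 0). lra.
Qed.

Lemma loc_trig_glob (al : R) (phi : R -> R) : 0 < al ->
  (forall t0, exists e, 0 < e /\ exists a b, forall t, Rabs (t - t0) < e -> phi t = a * cos (al*t) + b * sin (al*t)) ->
  exists a b, forall t, phi t = a * cos (al*t) + b * sin (al*t).
Proof.
  intros Hal H.
  set (P := fun t => cos (al*t) * phi t - sin (al*t) * Derive phi t / al).
  set (W := fun t => sin (al*t) * phi t + cos (al*t) * Derive phi t / al).
  assert (D1 : forall t0, exists e, 0 < e /\ forall t, Rabs (t - t0) < e -> P t = P t0 /\ W t = W t0).
  { intro t0. destruct (H t0) as [e [He [a [b Hk]]]].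
    assert (Dk : forall t, Rabs (t - t0) < e -> P t = a /\ W t = b).
    { intros t Ht.
      assert (Dd : Derive phi t = al * (- a * sin (al*t) + b * cos (al*t))).
      { apply is_derive_unique.
        apply (is_derive_ext_loc (fun t => a * cos (al*t) + b * sin (al*t))).
        - apply (locally_of _ t (e - Rabs (t - t0))). lra.
          intros s Hs. symmetry. apply Hk.
          pose proof (Rabs_triang (s - t) (t - t0)). replace (s - t + (t - t0)) with (s - t0) in H0 by ring. lra.
        - auto_derive; auto; ring. }
      unfold P, W. rewrite Dd, (Hk t Ht). pose proof (sin2_cos2 (al*t)) as Hsc. unfold Rsqr in Hsc.
      split.
      + transitivity (a*(sin (al*t) * sin (al*t) + cos (al*t) * cos (al*t))); [field; lra| rewrite Hsc; ring].
      + transitivity (b*(sin (al*t) * sin (al*t) + cos (al*t) * cos (al*t))); [field; lra| rewrite Hsc; ring]. }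
    exists e; split; auto. intros t Ht.
    destruct (Dk t Ht) as [E1 E2]. destruct (Dk t0) as [E3 E4]; [rewrite Rminus_diag, Rabs_R0; auto|].
    rewrite E1, E2, E3, E4; auto. }
  assert (CP : forall x y, P x = P y).
  { apply loc_const. intro t0. destruct (D1 t0) as [e [He Hs]]. exists e; split; auto.
    intros s Hs'. apply (Hs s Hs'). }
  assert (CW : forall x y, W x = W y).
  { apply loc_const. intro t0. destruct (D1 t0) as [e [He Hs]]. exists e; split; auto.
    intros s Hs'. apply (Hs s Hs'). }
  exists (P 0), (W 0). intro t. rewrite (CP 0 t), (CW 0 t). unfold P, W.
  pose proof (sin2_cos2 (al*t)) as Hsc. unfold Rsqr in Hsc.
  transitivity (phi t * (sin (al*t) * sin (al*t) + cos (al*t) * cos (al*t))); [rewrite Hsc; ring| field; lra].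
Qed.

Record V3 := mkV { c1 : R; c2 : R; c3 : R }.
Definition vS (p : S2) : V3 := mkV (s2x p) (s2y p) (s2z p).
Definition dot (a b : V3) : R := c1 a * c1 b + c2 a * c2 b + c3 a * c3 b.
Definition lc (x : R) (a : V3) (y : R) (b : V3) : V3 :=
  mkV (x * c1 a + y * c1 b) (x * c2 a + y * c2 b) (x * c3 a + y * c3 b).

Lemma V3_ext (a b : V3) : c1 a = c1 b -> c2 a = c2 b -> c3 a = c3 b -> a = b.
Proof. destruct a, b; simpl; intros; subst; reflexivity. Qed.

Lemma S2_ext (p q : S2) : vS p = vS q -> p = q.
Proof.
  destruct p as [x1 y1 z1 H1], q as [x2 y2 z2 H2]; unfold vS; simpl. intro E. injection E; intros; subst.
  f_equal. apply proof_irrelevance.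
Qed.

Lemma dot_vS p q : dot (vS p) (vS q) = s2dot p q.
Proof. reflexivity. Qed.

Lemma sq3_zero a b c : a*a+b*b+c*c = 0 -> a = 0 /\ b = 0 /\ c = 0.
Proof. intro H. assert (a = 0) by nra. assert (b = 0) by nra. assert (c = 0) by nra. auto. Qed.

Lemma dot_zero v : dot v v = 0 -> v = mkV 0 0 0.
Proof.
  destruct v as [x y z]; unfold dot; simpl; intro H.
  assert (x = 0) by nra. assert (y = 0) by nra. assert (z = 0) by nra. subst; reflexivity.
Qed.

Lemma s2dot_1 p q : s2dot p q = 1 -> p = q.
Proof.
  intro H. apply S2_ext.
  destruct p as [x1 y1 z1 H1], q as [x2 y2 z2 H2]; unfold vS, s2dot in *; simpl in *.
  assert (E: (x1-x2)*(x1-x2) + (y1-y2)*(y1-y2) + (z1-z2)*(z1-z2) = 0).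
  { transitivity ((x1*x1+y1*y1+z1*z1) + (x2*x2+y2*y2+z2*z2) - 2*(x1*x2+y1*y2+z1*z2)); [ring|].
    rewrite H1, H2, H. ring. }
  apply sq3_zero in E. destruct E as [E1 [E2 E3]].
  f_equal; lra.
Qed.

Definition northV := mkV 0 0 1.
Lemma north_unit : c1 northV * c1 northV + c2 northV * c2 northV + c3 northV * c3 northV = 1.
Proof. simpl; ring. Qed.
Definition north : S2 := mkS2 _ _ _ north_unit.

Definition toS2 (v : V3) : S2 :=
  match Req_EM_T (c1 v * c1 v + c2 v * c2 v + c3 v * c3 v) 1 with
  | left H => mkS2 _ _ _ H
  | right _ => north
  end.

Lemma toS2_vS v : dot v v = 1 -> vS (toS2 v) = v.
Proof.
  intro H. unfold toS2. destruct (Req_EM_T _ _) as [H'|H'].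
  - destruct v; reflexivity.
  - exfalso; apply H'; exact H.
Qed.

Definition onhel (P W : V3) (a b r : R) (x : M) : Prop :=
  exists t, vS (fst x) = lc (cos (a*t)) P (sin (a*t)) W /\ snd x = b*t + r.

Definition hparams (P W : V3) (a b : R) : Prop :=
  dot P P = 1 /\ dot W W = 1 /\ dot P W = 0 /\ a*a + b*b = 1 /\ 0 <= a.

Lemma dot_lc x P y W x' y' :
  dot (lc x P y W) (lc x' P y' W) = x*x'*dot P P + (x*y'+y*x')*dot P W + y*y'*dot W W.
Proof. unfold dot, lc; simpl; ring. Qed.

Lemma lc_unit P W a t : dot P P = 1 -> dot W W = 1 -> dot P W = 0 ->
  dot (lc (cos (a*t)) P (sin (a*t)) W) (lc (cos (a*t)) P (sin (a*t)) W) = 1.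
Proof.
  intros H1 H2 H3. rewrite dot_lc, H1, H2, H3. pose proof (sin2_cos2 (a*t)). unfold Rsqr in H. lra.
Qed.

Lemma lc_dot P W a s u : dot P P = 1 -> dot W W = 1 -> dot P W = 0 ->
  dot (lc (cos (a*s)) P (sin (a*s)) W) (lc (cos (a*u)) P (sin (a*u)) W) = cos (a*(s-u)).
Proof.
  intros H1 H2 H3. rewrite dot_lc, H1, H2, H3. replace (a*(s-u)) with (a*s - a*u) by ring.
  rewrite cos_minus. ring.
Qed.

Lemma acos_cos_abs x : Rabs x <= PI -> acos (cos x) = Rabs x.
Proof.
  intro H. destruct (Rle_lt_dec 0 x).
  - rewrite Rabs_right by lra. apply acos_cos. rewrite Rabs_right in H; lra.
  - rewrite Rabs_left by lra. rewrite <- cos_neg. apply acos_cos. rewrite Rabs_left in H; lra.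
Qed.

Definition hcurve (P W : V3) (a b r : R) (t : R) : M :=
  (toS2 (lc (cos (a*t)) P (sin (a*t)) W), b*t + r).

Lemma hcurve_li P W a b r : hparams P W a b -> locally_isometric (hcurve P W a b r).
Proof.
  intros [H1 [H2 [H3 [H4 H5]]]] t. exists (PI/2). split. { pose proof PI_RGT_0; lra. }
  intros s u Hs Hu. unfold distM, dS2, hcurve; cbn [fst snd].
  rewrite <- dot_vS, !toS2_vS by (apply lc_unit; auto).
  rewrite lc_dot by auto.
  assert (Ha : a <= 1) by nra.
  assert (Hsu : Rabs (s - u) < PI).
  { pose proof (Rabs_triang (s - t) (t - u)). replace (s - t + (t - u)) with (s - u) in H by ring.
    rewrite Rabs_minus_sym in Hu. lra. }
  rewrite acos_cos_abs.
  2:{ rewrite Rabs_mult, (Rabs_right a) by lra. pose proof (Rabs_pos (s-u)). nra. }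
  rewrite Rabs_mult, (Rabs_right a) by lra.
  assert (Harg : (a * Rabs (s - u)) ^ 2 + (b * s + r - (b * u + r)) ^ 2 = (Rabs (s-u))^2).
  { rewrite Rpow_mult_distr, !pow2_abs. transitivity ((a*a+b*b)*(s-u)^2); [ring| rewrite H4; ring]. }
  rewrite Harg. apply sqrt_pow2, Rabs_pos.
Qed.

Lemma onhel_geod P W a b r : hparams P W a b -> geodesic (onhel P W a b r).
Proof.
  intro Hp. exists (hcurve P W a b r). split; [apply hcurve_li; auto|].
  destruct Hp as [H1 [H2 [H3 _]]].
  intros [p h]; simpl. split.
  - intros [t [E1 E2]]. exists t. unfold hcurve. simpl in *. f_equal; [|auto].
    apply S2_ext. rewrite toS2_vS by (apply lc_unit; auto). auto.
  - intros [t E]. exists t. unfold hcurve in E. injection E; intros; subst. simpl.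
    rewrite toS2_vS by (apply lc_unit; auto). auto.
Qed.

Lemma interp_alg X Y A B D d1 d2 : 0 < X -> 0 < Y -> 0 <= A -> 0 <= B -> 0 <= D -> D <= A+B ->
  A*A + d1*d1 = X*X -> B*B + d2*d2 = Y*Y -> D*D + (d1+d2)*(d1+d2) = (X+Y)*(X+Y) -> d1 * Y = d2 * X.
Proof.
  intros HX HY HA HB HD HDAB E1 E2 E3.
  assert (HDD : D*D <= (A+B)*(A+B)) by nra.
  assert (S1 : X*Y <= A*B + d1*d2) by nra.
  assert (I : (A*B+d1*d2)*(A*B+d1*d2) + (A*d2 - B*d1)*(A*d2-B*d1) = (X*X)*(Y*Y)).
  { rewrite <- E1, <- E2; ring. }
  assert (HXY : 0 < X*Y) by nra.
  assert (S2 : (X*Y)*(X*Y) <= (A*B+d1*d2)*(A*B+d1*d2)) by nra.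
  assert (Z : (A*d2 - B*d1)*(A*d2-B*d1) = 0).
  { pose proof (Rle_0_sqr (A*d2 - B*d1)). unfold Rsqr in *. lra. }
  assert (Z2 : A*d2 = B*d1) by nra.
  assert (HAX : A <= X) by nra.
  assert (HBY : B <= Y) by nra.
  assert (Hd : 0 <= d1*d2) by nra.
  assert (Sq : (d1*Y)*(d1*Y) = (d2*X)*(d2*X)).
  { transitivity (d1*d1*(B*B+d2*d2)); [rewrite E2; ring|].
    transitivity ((B*d1)*(B*d1) + d1*d1*d2*d2); [ring|]. rewrite <- Z2.
    transitivity (d2*d2*(A*A+d1*d1)); [ring|]. rewrite E1; ring. }
  assert (F : (d1*Y - d2*X)*(d1*Y + d2*X) = 0) by (transitivity ((d1*Y)*(d1*Y) - (d2*X)*(d2*X)); [ring|lra]).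
  apply Rmult_integral in F. destruct F as [F|F]; [lra|].
  assert (0 <= (d1*Y)*(d2*X)).
  { replace ((d1*Y)*(d2*X)) with ((d1*d2)*(X*Y)) by ring. apply Rmult_le_pos; lra. }
  assert (d1*Y = - (d2*X)) by lra. nra.
Qed.

Definition th (c : R -> M) (s u : R) : R := acos (s2dot (fst (c s)) (fst (c u))).

Lemma LI2 c : locally_isometric c -> forall t, exists e, 0 < e /\ forall s u,
  Rabs (s - t) < e -> Rabs (u - t) < e ->
  th c s u * th c s u + (snd (c s) - snd (c u)) * (snd (c s) - snd (c u)) = (s-u)*(s-u).
Proof.
  intros Hc t. destruct (Hc t) as [e [He H]]. exists e; split; auto.
  intros s u Hs Hu. specialize (H s u Hs Hu). unfold distM, dS2 in H. unfold th.
  set (X := acos (s2dot (fst (c s)) (fst (c u))) ^ 2 + (snd (c s) - snd (c u)) ^ 2) in H.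
  assert (HX : 0 <= X) by (unfold X; pose proof (pow2_ge_0 (acos (s2dot (fst (c s)) (fst (c u))))); pose proof (pow2_ge_0 (snd (c s) - snd (c u))); lra).
  pose proof (Rsqr_sqrt X HX) as E. rewrite H in E. unfold Rsqr in E.
  rewrite <- Rabs_mult, Rabs_pos_eq in E by apply Rle_0_sqr. rewrite E. unfold X. ring.
Qed.

Lemma th_nonneg c s u : 0 <= th c s u.
Proof. unfold th. apply acos_bound. Qed.

Lemma th_tri c s t u : th c s u <= th c s t + th c t u.
Proof. unfold th. apply sph_tri. Qed.

Lemma h_local_affine c : locally_isometric c -> forall t0, exists e, 0 < e /\ exists k m,
  forall t, Rabs (t - t0) < e -> snd (c t) = k*t + m.
Proof.
  intros Hc t0. destruct (LI2 c Hc t0) as [e [He H]]. exists e; split; auto.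
  set (h := fun t => snd (c t)).
  assert (Tr : forall s t u, Rabs (s - t0) < e -> Rabs (t - t0) < e -> Rabs (u - t0) < e ->
     s < t -> t < u -> (h t - h s) * (u - t) = (h u - h t) * (t - s)).
  { intros s t u Hs Ht Hu Hst Htu.
    apply (interp_alg (t - s) (u - t) (th c s t) (th c t u) (th c s u)); try lra; try apply th_nonneg.
    - apply th_tri.
    - pose proof (H s t Hs Ht). unfold h. lra.
    - pose proof (H t u Ht Hu). unfold h. lra.
    - pose proof (H s u Hs Hu). unfold h.
      replace (snd (c t) - snd (c s) + (snd (c u) - snd (c t))) with (- (snd (c s) - snd (c u))) by ring.
      replace (t - s + (u - t)) with (- (s - u)) by ring. lra. }
  set (L := t0 - e/2). set (Rr := t0 + e/2).
  assert (HL : Rabs (L - t0) < e) by (unfold L; rewrite Rabs_left by lra; lra).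
  assert (HR : Rabs (Rr - t0) < e) by (unfold Rr; rewrite Rabs_right by lra; lra).
  set (k := (h Rr - h L)/e).
  assert (Hk : h Rr - h L = k * e) by (unfold k; field; lra).
  exists k, (h L - k * L).
  intros t Ht. fold (h t).
  assert (ERL : Rr - L = e) by (unfold Rr, L; lra).
  apply (Rmult_eq_reg_r e); [|lra].
  replace ((k*t + (h L - k*L))*e) with ((k*e)*(t - L) + h L*e) by ring. rewrite <- Hk.
  clearbody k h. clear H.
  destruct (Rtotal_order t L) as [T|[T|T]].
  - pose proof (Tr t L Rr Ht HL HR T ltac:(unfold L, Rr; lra)) as E. rewrite ERL in E. nra.
  - subst t. ring.
  - destruct (Rtotal_order t Rr) as [T2|[T2|T2]].
    + pose proof (Tr L t Rr HL Ht HR T T2) as E. rewrite <- ERL. nra.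
    + subst t. rewrite <- ERL. ring.
    + pose proof (Tr L Rr t HL HR Ht ltac:(unfold L, Rr; lra) T2) as E. rewrite ERL in E. rewrite <- ERL. nra.
Qed.

Lemma coord_solve x g0 g1 S C ct st c0 s0 : S <> 0 ->
  S*x + ((st*c0 - ct*s0)*C - S*(ct*c0+st*s0))*g0 - (st*c0 - ct*s0)*g1 = 0 ->
  x = ct*(c0*g0 - s0*((g1 - C*g0)/S)) + st*(s0*g0 + c0*((g1-C*g0)/S)).
Proof.
  intros HS H. apply (Rmult_eq_reg_l S); auto.
  transitivity ((st*c0 - ct*s0)*g1 - ((st*c0 - ct*s0)*C - S*(ct*c0+st*s0))*g0); [lra|].
  field. auto.
Qed.

Lemma h_affine c : locally_isometric c -> exists b r, forall t, snd (c t) = b*t + r.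
Proof.
  intros Hc. exists (Derive (fun t => snd (c t)) 0), (snd (c 0)).
  apply (loc_affine_glob (fun t => snd (c t))). apply h_local_affine; auto.
Qed.

Lemma dot_local c b r : locally_isometric c -> (forall t, snd (c t) = b*t+r) ->
  b*b <= 1 /\ forall t0, exists e, 0 < e /\ forall s u, Rabs (s-t0) < e -> Rabs (u-t0) < e ->
   s2dot (fst (c s)) (fst (c u)) = cos (sqrt (1 - b*b) * (s-u)).
Proof.
  intros Hc Hh.
  assert (Hth : forall t0, exists e, 0 < e /\ forall s u, Rabs (s-t0) < e -> Rabs (u-t0) < e ->
     th c s u * th c s u = (1 - b*b)*((s-u)*(s-u))).
  { intro t0. destruct (LI2 c Hc t0) as [e [He H]]. exists e; split; auto.
    intros s u Hs Hu. specialize (H s u Hs Hu). rewrite !Hh in H.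
    replace (b * s + r - (b * u + r)) with (b*(s-u)) in H by ring. lra. }
  assert (Hb : b*b <= 1).
  { destruct (Hth 0) as [e [He H]]. specialize (H 0 (e/2)).
    rewrite Rminus_diag, Rabs_R0 in H. rewrite Rminus_0_r, Rabs_right in H by lra.
    specialize (H He ltac:(lra)). pose proof (Rle_0_sqr (th c 0 (e/2))). unfold Rsqr in *.
    assert (0 < (0 - e/2)*(0 - e/2)) by nra. nra. }
  split; auto.
  intros t0. destruct (Hth t0) as [e [He H]]. exists e; split; auto.
  intros s u Hs Hu. specialize (H s u Hs Hu).
  set (a := sqrt (1 - b*b)).
  assert (Ha : 0 <= a) by apply sqrt_pos.
  assert (Haa : a * a = 1 - b*b) by (apply sqrt_sqrt; lra).
  assert (Et : th c s u = a * Rabs (s-u)).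
  { apply Rsqr_inj; [apply th_nonneg| apply Rmult_le_pos; [auto|apply Rabs_pos]|].
    unfold Rsqr. rewrite H.
    replace (a * Rabs (s - u) * (a * Rabs (s - u))) with ((a*a)*(Rabs (s-u) * Rabs (s-u))) by ring.
    rewrite <- Rabs_mult, Rabs_pos_eq by apply Rle_0_sqr. rewrite Haa. ring. }
  unfold th in Et. rewrite <- (cos_acos (s2dot (fst (c s)) (fst (c u)))) by apply s2dot_bound.
  rewrite Et. destruct (Rle_lt_dec 0 (s-u)).
  - rewrite Rabs_right by lra. reflexivity.
  - rewrite Rabs_left by lra. rewrite <- cos_neg. f_equal. ring.
Qed.

Lemma local_form (c : R -> M) a : 0 < a ->
  (forall t0, exists e, 0 < e /\ forall s u, Rabs (s-t0) < e -> Rabs (u-t0) < e ->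
     s2dot (fst (c s)) (fst (c u)) = cos (a * (s-u))) ->
  forall t0, exists e, 0 < e /\ exists Pl Wl, forall t, Rabs (t-t0) < e ->
     vS (fst (c t)) = lc (cos (a*t)) Pl (sin (a*t)) Wl.
Proof.
  intros Ha Hd t0. destruct (Hd t0) as [e [He H]]. exists e; split; auto.
  set (dl := Rmin (e/2) (PI/(2*a))).
  assert (Hdl : 0 < dl) by (unfold dl; apply Rmin_glb_lt; [lra| pose proof PI_RGT_0; apply Rdiv_lt_0_compat; lra]).
  assert (Hdl1 : dl <= e/2) by apply Rmin_l.
  assert (Hdl2 : dl <= PI/(2*a)) by apply Rmin_r.
  set (t1 := t0 + dl).
  assert (Ht1 : Rabs (t1 - t0) < e) by (unfold t1; rewrite Rabs_right by lra; lra).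
  assert (Ht0 : Rabs (t0 - t0) < e) by (rewrite Rminus_diag, Rabs_R0; auto).
  set (D := a * dl).
  assert (HD : 0 < D <= PI/2).
  { unfold D. split; [nra|]. apply (Rmult_le_compat_l a) in Hdl2; [|lra].
    replace (a * (PI / (2 * a))) with (PI/2) in Hdl2 by (field; lra). lra. }
  set (S := sin D). set (C := cos D).
  assert (HS : 0 < S) by (unfold S; apply sin_gt_0; pose proof PI_RGT_0; lra).
  set (g0 := vS (fst (c t0))). set (g1 := vS (fst (c t1))).
  set (V := mkV ((c1 g1 - C*c1 g0)/S) ((c2 g1 - C*c2 g0)/S) ((c3 g1 - C*c3 g0)/S)).
  exists (mkV (cos (a*t0) * c1 g0 - sin (a*t0) * c1 V) (cos (a*t0) * c2 g0 - sin (a*t0) * c2 V) (cos (a*t0) * c3 g0 - sin (a*t0) * c3 V)).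
  exists (mkV (sin (a*t0) * c1 g0 + cos (a*t0) * c1 V) (sin (a*t0) * c2 g0 + cos (a*t0) * c2 V) (sin (a*t0) * c3 g0 + cos (a*t0) * c3 V)).
  intros t Ht.
  set (x := vS (fst (c t))).
  set (cA := cos (a*t - a*t0)). set (sA := sin (a*t - a*t0)).
  set (K := sA*C - S*cA).
  assert (Exg0 : dot x g0 = cA) by (unfold x, g0, cA; rewrite dot_vS, H by auto; f_equal; ring).
  assert (Exg1 : dot x g1 = cA*C + sA*S).
  { unfold x, g1, cA, sA, C, S. rewrite dot_vS, H by auto. rewrite <- cos_minus. f_equal. unfold D, t1. ring. }
  assert (Eg01 : dot g0 g1 = C).
  { unfold g0, g1, C. rewrite dot_vS, H by auto. rewrite <- cos_neg. f_equal. unfold D, t1. ring. }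
  assert (Exx : dot x x = 1) by (unfold x; rewrite dot_vS; apply s2dot_self).
  assert (Eg00 : dot g0 g0 = 1) by (unfold g0; rewrite dot_vS; apply s2dot_self).
  assert (Eg11 : dot g1 g1 = 1) by (unfold g1; rewrite dot_vS; apply s2dot_self).
  set (y := mkV (S*c1 x + K*c1 g0 - sA*c1 g1) (S*c2 x + K*c2 g0 - sA*c2 g1) (S*c3 x + K*c3 g0 - sA*c3 g1)).
  assert (Ey : dot y y = S*S*dot x x + K*K*dot g0 g0 + sA*sA*dot g1 g1 + 2*S*K*dot x g0 - 2*S*sA*dot x g1 - 2*K*sA*dot g0 g1).
  { unfold y, dot; simpl. ring. }
  rewrite Exx, Eg00, Eg11, Exg0, Exg1, Eg01 in Ey.
  assert (Ey0 : dot y y = 0).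
  { rewrite Ey. unfold K.
    transitivity (S*S*(1 - cA*cA - sA*sA) + sA*sA*(1 - C*C - S*S)); [ring|].
    pose proof (sin2_cos2 (a*t - a*t0)) as T1. pose proof (sin2_cos2 D) as T2. unfold Rsqr in *.
    fold cA sA in T1. fold S C in T2. 
    replace (1 - cA*cA - sA*sA) with 0 by lra. replace (1 - C*C - S*S) with 0 by lra. ring. }
  apply dot_zero in Ey0. unfold y in Ey0. injection Ey0. intros Z3 Z2 Z1.
  assert (HcA : cA = cos (a*t) * cos (a*t0) + sin (a*t) * sin (a*t0)) by (unfold cA; apply cos_minus).
  assert (HsA : sA = sin (a*t) * cos (a*t0) - cos (a*t) * sin (a*t0)) by (unfold sA; apply sin_minus).
  unfold K in Z1, Z2, Z3. rewrite HcA, HsA in Z1, Z2, Z3.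
  fold x. apply V3_ext; unfold lc, V; simpl; apply coord_solve; lra.
Qed.

Lemma perp_exists P : dot P P = 1 -> exists W, dot W W = 1 /\ dot P W = 0.
Proof.
  destruct P as [p1 p2 p3]; unfold dot; simpl; intro H.
  destruct (Req_EM_T (p1*p1+p2*p2) 0) as [Z|Z].
  - exists (mkV 1 0 0); simpl.
    assert (p1 = 0) by nra. subst. split; ring.
  - assert (Hq : 0 < p1*p1+p2*p2) by (pose proof (Rle_0_sqr p1); pose proof (Rle_0_sqr p2); unfold Rsqr in *; lra).
    set (q := sqrt (p1*p1+p2*p2)).
    assert (Hq1 : q * q = p1*p1+p2*p2) by (apply sqrt_sqrt; lra).
    assert (Hq2 : 0 < q) by (apply sqrt_lt_R0; lra).
    exists (mkV (- p2 / q) (p1 / q) 0); simpl. split.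
    + transitivity ((p1*p1+p2*p2)/(q*q)); [field; lra| rewrite Hq1; field; lra].
    + field. lra.
Qed.

Lemma orthonormal_from_unit P W a : 0 < a ->
  (forall t, dot (lc (cos (a*t)) P (sin (a*t)) W) (lc (cos (a*t)) P (sin (a*t)) W) = 1) ->
  dot P P = 1 /\ dot W W = 1 /\ dot P W = 0.
Proof.
  intros Ha H.
  pose proof (H 0) as H0. pose proof (H (PI/(2*a))) as H1. pose proof (H (PI/(4*a))) as H2.
  rewrite dot_lc in H0, H1, H2.
  rewrite Rmult_0_r, cos_0, sin_0 in H0.
  replace (a * (PI / (2*a))) with (PI/2) in H1 by (field; lra).
  replace (a * (PI / (4*a))) with (PI/4) in H2 by (field; lra).
  rewrite cos_PI2, sin_PI2 in H1. rewrite cos_PI4, sin_PI4 in H2.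
  assert (E : 1 / sqrt 2 * (1 / sqrt 2) = 1/2).
  { assert (sqrt 2 * sqrt 2 = 2) by (apply sqrt_sqrt; lra).
    assert (0 < sqrt 2) by (apply sqrt_lt_R0; lra).
    transitivity (1 / (sqrt 2 * sqrt 2)); [field; lra| rewrite H3; reflexivity]. }
  rewrite E in H2. lra.
Qed.

Lemma classify (c : R -> M) : locally_isometric c -> exists P W a b r, hparams P W a b /\
  forall t, vS (fst (c t)) = lc (cos (a*t)) P (sin (a*t)) W /\ snd (c t) = b*t + r.
Proof.
  intros Hc. destruct (h_affine c Hc) as [b [r Hh]].
  destruct (dot_local c b r Hc Hh) as [Hb Hd].
  set (a := sqrt (1 - b*b)) in *.
  assert (Ha : 0 <= a) by apply sqrt_pos.
  assert (Haa : a * a = 1 - b*b) by (apply sqrt_sqrt; lra).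
  destruct (Rle_lt_dec a 0) as [Ha0|Ha0].
  - assert (a = 0) by lra. rewrite H in *.
    set (P := vS (fst (c 0))).
    assert (PP : dot P P = 1) by (unfold P; rewrite dot_vS; apply s2dot_self).
    destruct (perp_exists P PP) as [W [WW PW]].
    assert (LC : forall t0, exists e, 0 < e /\ forall s, Rabs (s - t0) < e -> fst (c s) = fst (c t0)).
    { intros t0. destruct (Hd t0) as [e [He Hs]]. exists e; split; auto. intros s Hs'.
      apply s2dot_1. rewrite Hs; auto. rewrite Rmult_0_l. apply cos_0. rewrite Rminus_diag, Rabs_R0; auto. }
    exists P, W, 0, b, r. split.
    { unfold hparams. repeat split; auto; lra. }
    intros t. split; auto.
    rewrite Rmult_0_l, cos_0, sin_0.
    assert (Ct : forall (g : S2 -> R), g (fst (c t)) = g (fst (c 0))).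
    { intro g. refine (loc_const (fun t => g (fst (c t))) _ t 0). intros t0.
      destruct (LC t0) as [e [He Hs]]. exists e; split; auto. intros s Hs'. rewrite (Hs s Hs'). reflexivity. }
    apply V3_ext; unfold lc, P, vS; simpl; rewrite (Ct s2x) || rewrite (Ct s2y) || rewrite (Ct s2z); ring.
  - assert (LF := local_form c a Ha0 Hd).
    destruct (loc_trig_glob a (fun t => s2x (fst (c t))) Ha0) as [a1 [b1 E1]].
    { intro t0. destruct (LF t0) as [e [He [Pl [Wl HL]]]]. exists e; split; auto. exists (c1 Pl), (c1 Wl).
      intros t Ht. pose proof (HL t Ht) as E. apply (f_equal c1) in E. simpl in E. rewrite E. ring. }
    destruct (loc_trig_glob a (fun t => s2y (fst (c t))) Ha0) as [a2 [b2 E2]].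
    { intro t0. destruct (LF t0) as [e [He [Pl [Wl HL]]]]. exists e; split; auto. exists (c2 Pl), (c2 Wl).
      intros t Ht. pose proof (HL t Ht) as E. apply (f_equal c2) in E. simpl in E. rewrite E. ring. }
    destruct (loc_trig_glob a (fun t => s2z (fst (c t))) Ha0) as [a3 [b3 E3]].
    { intro t0. destruct (LF t0) as [e [He [Pl [Wl HL]]]]. exists e; split; auto. exists (c3 Pl), (c3 Wl).
      intros t Ht. pose proof (HL t Ht) as E. apply (f_equal c3) in E. simpl in E. rewrite E. ring. }
    set (P := mkV a1 a2 a3). set (W := mkV b1 b2 b3).
    assert (Form : forall t, vS (fst (c t)) = lc (cos (a*t)) P (sin (a*t)) W).
    { intro t. apply V3_ext; simpl; [rewrite E1|rewrite E2|rewrite E3]; ring. }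
    destruct (orthonormal_from_unit P W a Ha0) as [PP [WW PW]].
    { intro t. rewrite <- Form. rewrite dot_vS. apply s2dot_self. }
    exists P, W, a, b, r. split; [unfold hparams; repeat split; auto; lra|]. intro t; split; auto.
Qed.

Lemma geod_classify (G : M -> Prop) : geodesic G ->
  exists P W a b r, hparams P W a b /\ forall x, G x <-> onhel P W a b r x.
Proof.
  intros [c [Hc HG]]. destruct (classify c Hc) as [P [W [a [b [r [Hp Hf]]]]]].
  exists P, W, a, b, r. split; auto. intro x. rewrite HG. split.
  - intros [t Ht]. subst x. exists t. apply Hf.
  - intros [t [E1 E2]]. exists t. destruct (Hf t) as [F1 F2].
    destruct x as [p h]. rewrite (surjective_pairing (c t)). simpl in *. f_equal.
    + apply S2_ext. congruence.
    + congruence.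
Qed.

Definition cross (a b : V3) : V3 :=
  mkV (c2 a * c3 b - c3 a * c2 b) (c3 a * c1 b - c1 a * c3 b) (c1 a * c2 b - c2 a * c1 b).
Definition det (a b c : V3) : R := dot (cross a b) c.
Definition negV (v : V3) : V3 := mkV (- c1 v) (- c2 v) (- c3 v).
Definition negS2 (p : S2) : S2 := toS2 (negV (vS p)).

Lemma vS_negS2 p : vS (negS2 p) = negV (vS p).
Proof. unfold negS2. apply toS2_vS. rewrite <- (s2dot_self p). unfold dot, negV, vS, s2dot; simpl; ring. Qed.

Lemma dot_sym a b : dot a b = dot b a.
Proof. unfold dot; ring. Qed.

Lemma det_lc3 x1 y1 x2 y2 x3 y3 P W :
  det (lc x1 P y1 W) (lc x2 P y2 W) (lc x3 P y3 W) = 0.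
Proof. unfold det, dot, cross, lc; simpl; ring. Qed.

Lemma det_lc2 x1 y1 x2 y2 P W Z :
  det (lc x1 P y1 W) (lc x2 P y2 W) Z = (x1*y2 - y1*x2) * det P W Z.
Proof. unfold det, dot, cross, lc; simpl; ring. Qed.

Lemma det_swap23 a b c : det a c b = - det a b c.
Proof. unfold det, dot, cross; simpl; ring. Qed.

Lemma det_rep12 a c : det a a c = 0.
Proof. unfold det, dot, cross; simpl; ring. Qed.

Lemma det_rep13 a b : det a b a = 0.
Proof. unfold det, dot, cross; simpl; ring. Qed.

Lemma det_rep23 a b : det a b b = 0.
Proof. unfold det, dot, cross; simpl; ring. Qed.

Lemma cross_norm u v : dot (cross u v) (cross u v) = dot u u * dot v v - dot u v * dot u v.
Proof. unfold dot, cross; simpl; ring. Qed.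

Lemma coplanar n a b c : dot n a = 0 -> dot n b = 0 -> dot n c = 0 -> n <> mkV 0 0 0 -> det a b c = 0.
Proof.
  intros Ha Hb Hc Hn.
  assert (I1 : det a b c * c1 n = dot n a * c1 (cross b c) + dot n b * c1 (cross c a) + dot n c * c1 (cross a b))
    by (unfold det, dot, cross; simpl; ring).
  assert (I2 : det a b c * c2 n = dot n a * c2 (cross b c) + dot n b * c2 (cross c a) + dot n c * c2 (cross a b))
    by (unfold det, dot, cross; simpl; ring).
  assert (I3 : det a b c * c3 n = dot n a * c3 (cross b c) + dot n b * c3 (cross c a) + dot n c * c3 (cross a b))
    by (unfold det, dot, cross; simpl; ring).
  rewrite Ha, Hb, Hc in I1, I2, I3.
  destruct (Req_dec (det a b c) 0) as [D|D]; auto. exfalso. apply Hn.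
  destruct n as [n1 n2 n3]; simpl in *.
  f_equal; apply (Rmult_eq_reg_l (det a b c)); auto; lra.
Qed.

Lemma s2dot_m1 p q : s2dot p q = -1 -> q = negS2 p.
Proof.
  intro H. apply s2dot_1. rewrite <- dot_vS, vS_negS2. rewrite <- dot_vS in H.
  unfold dot, negV in *; simpl in *. lra.
Qed.

Lemma cross_nonzero u v : v <> u -> v <> negS2 u -> cross (vS u) (vS v) <> mkV 0 0 0.
Proof.
  intros H1 H2 E.
  assert (N : dot (cross (vS u) (vS v)) (cross (vS u) (vS v)) = 0) by (rewrite E; unfold dot; simpl; ring).
  rewrite cross_norm, !dot_vS, !s2dot_self in N.
  pose proof (s2dot_bound u v).
  assert (s2dot u v = 1 \/ s2dot u v = -1) by nra.
  destruct H0 as [H0|H0].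
  - apply s2dot_1 in H0. auto.
  - apply s2dot_m1 in H0. auto.
Qed.

Lemma cos_sin_param x y : x*x + y*y = 1 -> exists t, x = cos t /\ y = sin t.
Proof.
  intro H. assert (Hx : -1 <= x <= 1) by nra.
  destruct (Rle_lt_dec 0 y) as [Hy|Hy].
  - exists (acos x). rewrite cos_acos, sin_acos by auto. split; auto.
    apply Rsqr_inj; [auto| apply sqrt_pos|]. rewrite Rsqr_sqrt by (unfold Rsqr; nra). unfold Rsqr; lra.
  - exists (- acos x). rewrite cos_neg, sin_neg, cos_acos, sin_acos by auto. split; auto.
    assert (sqrt (1 - x²) = - y); [|lra].
    apply Rsqr_inj; [apply sqrt_pos| lra |]. rewrite Rsqr_sqrt by (unfold Rsqr; nra). unfold Rsqr; lra.
Qed.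

Lemma on_circle_of_det P W Z : dot P P = 1 -> dot W W = 1 -> dot P W = 0 -> dot Z Z = 1 ->
  det P W Z = 0 -> exists t, Z = lc (cos t) P (sin t) W.
Proof.
  intros HP HW HPW HZ HD.
  set (x := dot Z P). set (y := dot Z W).
  set (e := mkV (c1 Z - x * c1 P - y * c1 W) (c2 Z - x * c2 P - y * c2 W) (c3 Z - x * c3 P - y * c3 W)).
  assert (eP : dot e P = 0).
  { transitivity (dot Z P - x * dot P P - y * dot P W); [unfold e, dot; simpl; ring|]. rewrite HP, HPW. unfold x; ring. }
  assert (eW : dot e W = 0).
  { transitivity (dot Z W - x * dot P W - y * dot W W); [unfold e, dot; simpl; ring|]. rewrite HW, HPW. unfold y; ring. }
  assert (eN : dot e (cross P W) = 0).
  { transitivity (det P W Z - x * det P W P - y * det P W W); [unfold e, det, dot, cross; simpl; ring|].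
    rewrite HD, det_rep13, det_rep23. ring. }
  assert (Lag : dot (cross e (cross P W)) (cross e (cross P W)) = dot e e * dot (cross P W) (cross P W) - dot e (cross P W) * dot e (cross P W))
    by apply cross_norm.
  assert (BAC : cross e (cross P W) = lc (dot e W) P (- dot e P) W) by (apply V3_ext; unfold cross, lc, dot; simpl; ring).
  rewrite BAC, eP, eW, eN, (cross_norm P W), HP, HW, HPW, dot_lc in Lag.
  assert (ee : dot e e = 0) by (ring_simplify in Lag; lra).
  apply dot_zero in ee. unfold e in ee. injection ee; intros E3 E2 E1.
  assert (ZZ : Z = lc x P y W) by (apply V3_ext; unfold lc; simpl; lra).
  assert (Hxy : x*x + y*y = 1).
  { rewrite <- HZ. replace (dot Z Z) with (dot (lc x P y W) (lc x P y W)) by (rewrite <- ZZ; reflexivity).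
    rewrite dot_lc, HP, HW, HPW. ring. }
  destruct (cos_sin_param x y Hxy) as [t [Ex Ey]]. exists t. rewrite <- Ex, <- Ey. exact ZZ.
Qed.

Lemma onhel_at P W a b r t p : vS p = lc (cos (a*t)) P (sin (a*t)) W -> onhel P W a b r (p, b*t + r).
Proof. intro H. exists t. split; auto. Qed.

Lemma lc_10 P W : lc 1 P 0 W = P.
Proof. apply V3_ext; unfold lc; simpl; ring. Qed.

Lemma circ_through (p q : S2) : exists W, hparams (vS p) W 1 0 /\ exists t, vS q = lc (cos (1*t)) (vS p) (sin (1*t)) W.
Proof.
  assert (PP : dot (vS p) (vS p) = 1) by (rewrite dot_vS; apply s2dot_self).
  destruct (classic (q = p)) as [E|E].
  { subst q. destruct (perp_exists _ PP) as [W [WW PW]]. exists W. split.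
    - repeat split; auto; lra.
    - exists 0. rewrite Rmult_0_r, cos_0, sin_0, lc_10. reflexivity. }
  destruct (classic (q = negS2 p)) as [E2|E2].
  { destruct (perp_exists _ PP) as [W [WW PW]]. exists W. split.
    - repeat split; auto; lra.
    - exists PI. rewrite Rmult_1_l, cos_PI, sin_PI, E2, vS_negS2. apply V3_ext; unfold lc, negV; simpl; ring. }
  set (d := s2dot p q).
  pose proof (s2dot_bound p q) as Hb. fold d in Hb.
  assert (Hd1 : d <> 1) by (intro H; apply E; symmetry; apply s2dot_1; auto).
  assert (Hd2 : d <> -1) by (intro H; apply E2; apply s2dot_m1; auto).
  assert (Hlt : -1 < d < 1).
  { destruct Hb as [Hb1 Hb2]. split.
    - destruct Hb1 as [Hb1|Hb1]; [auto| exfalso; apply Hd2; auto].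
    - destruct Hb2 as [Hb2|Hb2]; [auto| exfalso; apply Hd1; auto]. }
  assert (Hpos : 0 < 1 - d*d) by nra.
  set (sg := sqrt (1 - d*d)).
  assert (Hsg : 0 < sg) by (apply sqrt_lt_R0; lra).
  assert (Hsg2 : sg * sg = 1 - d*d) by (apply sqrt_sqrt; lra).
  set (W := mkV ((s2x q - d * s2x p)/sg) ((s2y q - d * s2y p)/sg) ((s2z q - d * s2z p)/sg)).
  assert (QQ : dot (vS q) (vS q) = 1) by (rewrite dot_vS; apply s2dot_self).
  assert (PQ : dot (vS p) (vS q) = d) by (rewrite dot_vS; reflexivity).
  exists W. split.
  - repeat split; auto; try lra.
    + transitivity ((dot (vS q) (vS q) - 2*d*dot (vS p) (vS q) + d*d*dot (vS p) (vS p)) / (sg*sg)).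
      { unfold W, dot, vS; simpl. field. lra. }
      rewrite QQ, PQ, PP, Hsg2. field. lra.
    + transitivity ((dot (vS p) (vS q) - d * dot (vS p) (vS p)) / sg).
      { unfold W, dot, vS; simpl. field. lra. }
      rewrite PQ, PP. field. lra.
  - exists (acos d). rewrite Rmult_1_l, cos_acos, sin_acos by lra.
    replace (sqrt (1 - d²)) with sg by (unfold sg, Rsqr; reflexivity).
    apply V3_ext; unfold W, lc, vS; simpl; field; lra.
Qed.

Lemma circle (p q : S2) (h : R) : exists W, hparams (vS p) W 1 0 /\
  onhel (vS p) W 1 0 h (p, h) /\ onhel (vS p) W 1 0 h (q, h).
Proof.
  destruct (circ_through p q) as [W [Hp [t Ht]]]. exists W. split; auto. split.
  - exists 0. rewrite Rmult_0_r, cos_0, sin_0, lc_10. simpl. split; auto; ring.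
  - exists t. simpl. split; auto; ring.
Qed.

Lemma circle_antipode P W h x : onhel P W 1 0 h x -> onhel P W 1 0 h (negS2 (fst x), snd x).
Proof.
  intros [t [E1 E2]]. exists (t + PI). simpl. split; [|rewrite E2; ring].
  rewrite vS_negS2, E1, !Rmult_1_l, neg_cos, neg_sin. apply V3_ext; unfold lc, negV; simpl; ring.
Qed.

Lemma negS2_neq p : negS2 p <> p.
Proof.
  intro E. assert (H : vS (negS2 p) = vS p) by (rewrite E; reflexivity).
  rewrite vS_negS2 in H. pose proof (s2dot_self p) as U.
  destruct p as [x y z Hu]; unfold vS, negV in H; simpl in *. injection H; intros. unfold s2dot in U; simpl in U.
  assert (x = 0) by lra. assert (y = 0) by lra. assert (z = 0) by lra. subst. lra.
Qed.

Lemma pair_neq_fst (x y : M) : fst x <> fst y -> x <> y.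
Proof. intros H E; subst; auto. Qed.

Lemma onhel_pt P W a b r t : dot P P = 1 -> dot W W = 1 -> dot P W = 0 ->
  onhel P W a b r (toS2 (lc (cos (a*t)) P (sin (a*t)) W), b*t + r).
Proof. intros. exists t. simpl. rewrite toS2_vS by (apply lc_unit; auto). auto. Qed.

Definition GL (K : M -> Prop) : Prop :=
  (forall y, exists x, K x /\ snd x = y) /\ (forall x x', K x -> K x' -> snd x = snd x' -> x = x').

Lemma dichot K : geodesic K -> horizontal K \/ GL K.
Proof.
  intros HK. destruct (geod_classify K HK) as [P [W [a [b [r [Hp HE]]]]]].
  destruct Hp as [PP [WW [PW [Hab Ha]]]].
  destruct (Req_dec b 0) as [Hb|Hb].
  - left. split; auto. exists r. intros x Kx. apply HE in Kx. destruct Kx as [t [_ E]]. rewrite E, Hb; ring.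
  - right. split.
    + intro y. set (t := (y - r)/b). exists (toS2 (lc (cos (a*t)) P (sin (a*t)) W), b*t + r).
      split. { apply HE. apply onhel_pt; auto. } simpl. unfold t. field. auto.
    + intros x x' Kx Kx' Eh. apply HE in Kx. apply HE in Kx'.
      destruct Kx as [t [E1 E2]], Kx' as [t' [E1' E2']].
      assert (t = t') by (apply (Rmult_eq_reg_l b); auto; lra). subst t'.
      destruct x as [p h], x' as [p' h']. simpl in *. f_equal; [apply S2_ext; congruence| congruence].
Qed.

Lemma horiz_not_GL K : horizontal K -> GL K -> False.
Proof.
  intros [_ [r Hr]] [Su _]. destruct (Su (r+1)) as [x [Kx Ex]]. apply Hr in Kx. lra.
Qed.

Lemma horiz_form K : horizontal K -> exists P W r, hparams P W 1 0 /\ forall x, K x <-> onhel P W 1 0 r x.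
Proof.
  intros [HK [r0 Hr]]. destruct (geod_classify K HK) as [P [W [a [b [r [Hp HE]]]]]].
  pose proof Hp as [PP [WW [PW [Hab Ha]]]].
  assert (K0 : K (toS2 (lc (cos (a*0)) P (sin (a*0)) W), b*0 + r)) by (apply HE; apply onhel_pt; auto).
  assert (K1 : K (toS2 (lc (cos (a*1)) P (sin (a*1)) W), b*1 + r)) by (apply HE; apply onhel_pt; auto).
  apply Hr in K0. apply Hr in K1. simpl in K0, K1.
  assert (b = 0) by lra. subst b.
  assert (a = 1) by nra. subst a.
  exists P, W, r. split; auto.
Qed.

Lemma onhel_horizontal P W r : hparams P W 1 0 -> horizontal (onhel P W 1 0 r).
Proof.
  intro Hp. split; [apply onhel_geod; auto|]. exists r. intros x [t [_ E]]. rewrite E; ring.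
Qed.

Lemma img_iff (f g : M -> M) (Hgf : forall x, g (f x) = x) (Hfg : forall y, f (g y) = y) G y :
  image f G y <-> G (g y).
Proof.
  split.
  - intros [x [Gx E]]. subst y. rewrite Hgf. auto.
  - intro H. exists (g y). split; auto.
Qed.

Lemma img_of (f : M -> M) G x : G x -> image f G (f x).
Proof. intro H. exists x; auto. Qed.

Lemma onhel_mk P W a b r t p h : vS p = lc (cos (a*t)) P (sin (a*t)) W -> h = b*t + r -> onhel P W a b r (p, h).
Proof. intros. exists t. simpl. auto. Qed.

Lemma inj_of (f g : M -> M) (Hgf : forall x, g (f x) = x) : forall x y, f x = f y -> x = y.
Proof. intros x y E. rewrite <- (Hgf x), <- (Hgf y), E. reflexivity. Qed.

Lemma good_prop f (Hgp : geodesic_preserving f) (Hinj : forall x y, f x = f y -> x = y) K :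
  geodesic K -> forall z1 z2, K z1 -> K z2 -> snd (f z1) <> snd (f z2) ->
  forall w1 w2, K w1 -> K w2 -> w1 <> w2 -> snd (f w1) <> snd (f w2).
Proof.
  intros HK z1 z2 K1 K2 Hz w1 w2 W1 W2 Hw E.
  destruct (dichot _ (Hgp K HK)) as [Hh|[_ In]].
  - destruct Hh as [_ [r Hr]]. apply Hz. rewrite (Hr _ (img_of f K z1 K1)), (Hr _ (img_of f K z2 K2)). auto.
  - apply Hw. apply Hinj. apply In; auto; apply img_of; auto.
Qed.

Lemma normal_not_on P W c s : dot P P = 1 -> dot W W = 1 -> dot P W = 0 -> cross P W <> lc c P s W.
Proof.
  intros PP WW PW E.
  assert (N1 : dot (cross P W) (cross P W) = 1) by (rewrite cross_norm, PP, WW, PW; ring).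
  assert (N0 : dot (cross P W) (cross P W) = 0).
  { rewrite E at 2. transitivity (c * det P W P + s * det P W W); [unfold det, dot, lc, cross; simpl; ring|].
    rewrite det_rep13, det_rep23. ring. }
  lra.
Qed.

Lemma C1 f g (Hgf : forall x, g (f x) = x) (Hfg : forall y, f (g y) = y) (Hgp : geodesic_preserving f) :
  forall H, horizontal H -> horizontal (image f H).
Proof.
  intros H HH. destruct (dichot _ (Hgp H (proj1 HH))) as [|[Su In]]; auto. exfalso.
  pose proof (inj_of f g Hgf) as Hinj.
  destruct (horiz_form H HH) as [P [W [r [Hp HE]]]]. pose proof Hp as [PP [WW [PW _]]].
  assert (HG : geodesic H) by apply HH.
  set (Good := fun z1 z2 => snd (f z1) <> snd (f z2)).
  set (p0 := toS2 P).
  assert (x0H : H (p0, r)).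
  { apply HE. apply (onhel_mk _ _ _ _ _ 0); [|ring]. unfold p0. rewrite toS2_vS by auto.
    rewrite Rmult_0_r, cos_0, sin_0, lc_10. reflexivity. }
  assert (x1H : H (toS2 W, r)).
  { apply HE. apply (onhel_mk _ _ _ _ _ (PI/2)); [|ring]. rewrite toS2_vS by auto.
    rewrite Rmult_1_l, cos_PI2, sin_PI2. apply V3_ext; unfold lc; simpl; ring. }
  assert (G01 : Good (p0, r) (toS2 W, r)).
  { intro E. assert (f (p0, r) = f (toS2 W, r)) by (apply In; auto; apply img_of; auto).
    apply Hinj in H0. injection H0; intro E2.
    assert (vS p0 = vS (toS2 W)) by (rewrite E2; reflexivity). unfold p0 in H1.
    rewrite !toS2_vS in H1 by auto. rewrite H1 in PW. lra. }
  assert (GA : Good (p0, r) (negS2 p0, r)).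
  { destruct (circle p0 (toS2 W) r) as [WA [HpA [A1 A2]]].
    apply (good_prop f Hgp Hinj _ (onhel_geod _ _ _ _ r HpA) _ _ A1 A2 G01).
    - auto.
    - apply (circle_antipode _ _ _ (p0, r) A1).
    - apply pair_neq_fst. simpl. intro E; symmetry in E; apply (negS2_neq p0 E). }
  assert (GB : forall z, snd z = r -> Good z (negS2 (fst z), r)).
  { intros [q h] Hh. simpl in Hh. subst h. simpl.
    destruct (circle p0 q r) as [WB [HpB [B1 B2]]].
    apply (good_prop f Hgp Hinj _ (onhel_geod _ _ _ _ r HpB) _ _ B1 (circle_antipode _ _ _ (p0, r) B1) GA).
    - auto.
    - apply (circle_antipode _ _ _ (q, r) B2).
    - apply pair_neq_fst. simpl. intro E; symmetry in E; apply (negS2_neq q E). }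
  assert (GC : forall z1 z2, snd z1 = r -> snd z2 = r -> z1 <> z2 -> Good z1 z2).
  { intros [q1 h1] [q2 h2] E1 E2 Hne. simpl in E1, E2. subst h1 h2.
    destruct (circle q1 q2 r) as [WC [HpC [C1 C2]]].
    apply (good_prop f Hgp Hinj _ (onhel_geod _ _ _ _ r HpC) _ _ C1 (circle_antipode _ _ _ (q1, r) C1) (GB (q1, r) eq_refl)); auto. }
  set (N := cross P W).
  assert (NN : dot N N = 1) by (unfold N; rewrite cross_norm, PP, WW, PW; ring).
  set (y := (toS2 N, r)).
  destruct (Su (snd (f y))) as [w [Iw Ew]].
  apply (img_iff f g Hgf Hfg) in Iw. pose proof (proj1 (HE _) Iw) as Ow.
  assert (Hx : snd (g w) = r) by (destruct Ow as [t [_ E]]; rewrite E; ring).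
  destruct (classic (g w = y)) as [Ey|Ey].
  - rewrite Ey in Ow. destruct Ow as [t [E _]]. unfold y in E. simpl in E. rewrite toS2_vS in E by auto.
    apply (normal_not_on P W _ _ PP WW PW E).
  - apply (GC (g w) y Hx eq_refl Ey). rewrite Hfg. auto.
Qed.

Lemma C2 f g (Hgf : forall x, g (f x) = x) (Hfg : forall y, f (g y) = y) (Hgp : geodesic_preserving f) :
  forall z1 z2, snd z1 = snd z2 -> snd (f z1) = snd (f z2).
Proof.
  intros [q1 h1] [q2 h2] E. simpl in E. subst h2.
  destruct (circle q1 q2 h1) as [W [Hp [A1 A2]]].
  destruct (C1 f g Hgf Hfg Hgp _ (onhel_horizontal _ _ h1 Hp)) as [_ [r' Hr]].
  rewrite (Hr _ (img_of f _ _ A1)), (Hr _ (img_of f _ _ A2)). reflexivity.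
Qed.

Lemma C3 f g (Hgf : forall x, g (f x) = x) (Hfg : forall y, f (g y) = y) (Hgp : geodesic_preserving f) :
  forall G, geodesic G -> ~ horizontal G -> ~ horizontal (image f G).
Proof.
  intros G HG HnH [_ [s Hs]].
  destruct (dichot G HG) as [|[Su _]]; [auto|].
  set (w := g (north, s+1)).
  destruct (Su (snd w)) as [x [Gx Ex]].
  pose proof (C2 f g Hgf Hfg Hgp x w Ex) as E.
  rewrite (Hs _ (img_of f G x Gx)) in E. unfold w in E. rewrite Hfg in E. simpl in E. lra.
Qed.

Lemma fst_neq_of (f g : M -> M) (Hgf : forall x, g (f x) = x) (Hfg : forall y, f (g y) = y) (Hgp : geodesic_preserving f) (q1 q2 : S2) m :
  q1 <> q2 -> fst (f (q1, m)) <> fst (f (q2, m)).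
Proof.
  intros Hq E. apply Hq.
  assert (Eh : snd (f (q1, m)) = snd (f (q2, m))) by (apply (C2 f g Hgf Hfg Hgp); reflexivity).
  assert (f (q1, m) = f (q2, m)) by (rewrite (surjective_pairing (f (q1, m))), (surjective_pairing (f (q2, m))), E, Eh; reflexivity).
  apply (inj_of f g Hgf) in H. injection H; auto.
Qed.

Lemma core f g (Hgf : forall x, g (f x) = x) (Hfg : forall y, f (g y) = y) (Hgp : geodesic_preserving f)
  (n : V3) (m : R) (qi qj qk : S2) :
  n <> mkV 0 0 0 ->
  det (vS qi) (vS qj) (vS qk) <> 0 ->
  dot n (vS (fst (f (qi, m)))) = 0 -> dot n (vS (fst (f (qj, m)))) = 0 -> dot n (vS (fst (f (qk, m)))) = 0 ->
  fst (f (qj, m)) <> negS2 (fst (f (qi, m))) -> False.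
Proof.
  intros Hn Hdet Ni Nj Nk Hneg.
  assert (Hij : qi <> qj) by (intro E; subst; apply Hdet; apply det_rep12).
  pose proof (fst_neq_of f g Hgf Hfg Hgp qi qj m Hij) as Zij.
  destruct (circle qi qj m) as [WD [HpD [D1 D2]]].
  destruct (horiz_form _ (C1 f g Hgf Hfg Hgp _ (onhel_horizontal _ _ m HpD))) as [P2 [W2 [r2 [Hp2 HE2]]]].
  pose proof Hp2 as [PP [WW [PW _]]].
  pose proof (proj1 (HE2 _) (img_of f _ _ D1)) as [ti [Ei Hi]].
  pose proof (proj1 (HE2 _) (img_of f _ _ D2)) as [tj [Ej Hj]].
  rewrite Rmult_1_l in Ei, Ej.
  set (Zi := fst (f (qi, m))) in *. set (Zj := fst (f (qj, m))) in *. set (Zk := fst (f (qk, m))) in *.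
  assert (Dz : det (vS Zi) (vS Zj) (vS Zk) = 0) by (apply (coplanar n); auto).
  rewrite Ei, Ej, det_lc2 in Dz.
  assert (Hs : cos ti * sin tj - sin ti * cos tj <> 0).
  { intro Hs.
    assert (Id : (cos ti * cos tj + sin ti * sin tj)^2 + (cos ti * sin tj - sin ti * cos tj)^2
        = (sin ti * sin ti + cos ti * cos ti) * (sin tj * sin tj + cos tj * cos tj)) by ring.
    pose proof (sin2_cos2 ti) as T1. pose proof (sin2_cos2 tj) as T2. unfold Rsqr in T1, T2.
    rewrite T1, T2, Hs in Id.
    assert (Dij : s2dot Zi Zj = cos ti * cos tj + sin ti * sin tj).
    { rewrite <- dot_vS, Ei, Ej, dot_lc, PP, WW, PW. ring. }
    assert (s2dot Zi Zj = 1 \/ s2dot Zi Zj = -1) by (rewrite Dij; nra).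
    destruct H as [H|H].
    - apply s2dot_1 in H. auto.
    - apply s2dot_m1 in H. auto. }
  assert (Dk : det P2 W2 (vS Zk) = 0).
  { apply (Rmult_eq_reg_l (cos ti * sin tj - sin ti * cos tj)); auto. rewrite Dz. ring. }
  destruct (on_circle_of_det P2 W2 (vS Zk) PP WW PW) as [tk Ek]; auto.
  { rewrite dot_vS. apply s2dot_self. }
  assert (Ok : onhel P2 W2 1 0 r2 (f (qk, m))).
  { exists tk. rewrite Rmult_1_l. split; auto.
    rewrite <- (C2 f g Hgf Hfg Hgp (qi, m) (qk, m)) by reflexivity. rewrite Hi. ring. }
  apply HE2 in Ok. apply (img_iff f g Hgf Hfg) in Ok. rewrite Hgf in Ok.
  destruct Ok as [tk' [Ek' _]]. destruct D2 as [tj' [Ej' _]]. simpl in Ek', Ej'.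
  apply Hdet. rewrite Ek', Ej'. rewrite <- (lc_10 (vS qi) WD) at 1.
  replace 1 with (cos (1*0)) at 1 by (rewrite Rmult_0_r; apply cos_0).
  replace 0 with (sin (1*0)) at 1 by (rewrite Rmult_0_r; apply sin_0).
  apply det_lc3.
Qed.

Lemma C4 f g (Hgf : forall x, g (f x) = x) (Hfg : forall y, f (g y) = y) (Hgp : geodesic_preserving f) :
  forall (p : S2) r r', r <> r' ->
  fst (f (p, r')) = fst (f (p, r)) \/ fst (f (p, r')) = negS2 (fst (f (p, r))).
Proof.
  intros p r r' Hrr.
  set (u := fst (f (p, r))). set (v := fst (f (p, r'))).
  destruct (classic (v = u)) as [|Hvu]; [left; auto|].
  destruct (classic (v = negS2 u)) as [|Hvn]; [right; auto|].
  exfalso.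
  set (n := cross (vS u) (vS v)).
  assert (Hn : n <> mkV 0 0 0) by (apply cross_nonzero; auto).
  set (P0 := vS p).
  assert (PP : dot P0 P0 = 1) by (unfold P0; rewrite dot_vS; apply s2dot_self).
  destruct (perp_exists P0 PP) as [E1 [E1E1 PE1]].
  set (E2 := cross P0 E1).
  assert (E2E2 : dot E2 E2 = 1) by (unfold E2; rewrite cross_norm, PP, E1E1, PE1; ring).
  assert (PE2 : dot P0 E2 = 0) by (unfold E2; rewrite dot_sym; apply det_rep13).
  assert (E1E2 : dot E1 E2 = 0) by (unfold E2; rewrite dot_sym; apply det_rep23).
  set (L := sqrt (4*PI*PI + (r'-r)*(r'-r))).
  assert (HL2 : L * L = 4*PI*PI + (r'-r)*(r'-r)).
  { apply sqrt_sqrt. pose proof PI_RGT_0. pose proof (Rle_0_sqr (r'-r)). unfold Rsqr in *. nra. }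
  assert (HL : 0 < L).
  { apply sqrt_lt_R0. pose proof PI_RGT_0. pose proof (Rle_0_sqr (r'-r)). unfold Rsqr in *. nra. }
  set (a := 2*PI/L). set (b := (r'-r)/L).
  assert (Ha : 0 < a) by (unfold a; pose proof PI_RGT_0; apply Rdiv_lt_0_compat; lra).
  assert (Hab : a*a + b*b = 1).
  { unfold a, b. transitivity ((4*PI*PI + (r'-r)*(r'-r))/(L*L)); [field; lra|]. rewrite HL2. field. rewrite <- HL2. nra. }
  set (m := b*(L/8) + r).
  set (cq := cos (PI/4)). set (sq := sin (PI/4)).
  assert (Hcs : sq = cq) by (unfold sq, cq; rewrite cos_PI4, sin_PI4; reflexivity).
  assert (Hc : 0 < cq) by (unfold cq; rewrite cos_PI4; apply Rdiv_lt_0_compat; [lra| apply sqrt_lt_R0; lra]).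
  set (zq := fun w => toS2 (lc cq P0 sq w)).
  assert (Hzq : forall w, dot w w = 1 -> dot P0 w = 0 -> vS (zq w) = lc cq P0 sq w).
  { intros w Hw Pw. unfold zq, cq, sq. apply toS2_vS. replace (PI/4) with (1*(PI/4)) by ring. apply lc_unit; auto. }
  assert (KEY : forall w, dot w w = 1 -> dot P0 w = 0 -> dot n (vS (fst (f (zq w, m)))) = 0).
  { intros w Hw Pw.
    assert (Hp : hparams P0 w a b) by (repeat split; auto; lra).
    set (K := onhel P0 w a b r).
    destruct (geod_classify _ (Hgp K (onhel_geod _ _ _ _ r Hp))) as [P' [W' [a' [b' [r'' [Hp' HE']]]]]].
    assert (K0 : K (p, r)).
    { apply (onhel_mk _ _ _ _ _ 0); [|ring]. fold P0. rewrite Rmult_0_r, cos_0, sin_0, lc_10. reflexivity. }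
    assert (K1 : K (p, r')).
    { apply (onhel_mk _ _ _ _ _ L).
      - fold P0. unfold a. replace (2*PI/L*L) with (2*PI) by (field; lra). rewrite cos_2PI, sin_2PI, lc_10. reflexivity.
      - unfold b. field. lra. }
    assert (K2 : K (zq w, m)).
    { apply (onhel_mk _ _ _ _ _ (L/8)); [|reflexivity]. rewrite Hzq by auto. unfold a, cq, sq.
      replace (2*PI/L*(L/8)) with (PI/4) by (field; lra). reflexivity. }
    destruct (proj1 (HE' _) (img_of f _ _ K0)) as [t0 [F0 _]].
    destruct (proj1 (HE' _) (img_of f _ _ K1)) as [t1 [F1 _]].
    destruct (proj1 (HE' _) (img_of f _ _ K2)) as [t2 [F2 _]].
    unfold n, u, v. fold (det (vS (fst (f (p, r)))) (vS (fst (f (p, r')))) (vS (fst (f (zq w, m))))).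
    rewrite F0, F1, F2. apply det_lc3. }
  assert (mE1 : dot (negV E1) (negV E1) = 1) by (rewrite <- E1E1; unfold dot, negV; simpl; ring).
  assert (PmE1 : dot P0 (negV E1) = 0) by (transitivity (- dot P0 E1); [unfold dot, negV; simpl; ring| rewrite PE1; ring]).
  set (q1 := zq E1). set (q2 := zq E2). set (q3 := zq (negV E1)).
  assert (Hdet : det (vS q1) (vS q2) (vS q3) <> 0).
  { unfold q1, q2, q3. rewrite !Hzq by auto. rewrite Hcs.
    assert (D : det (lc cq P0 cq E1) (lc cq P0 cq E2) (lc cq P0 cq (negV E1)) = 2 * cq*cq*cq * det P0 E1 E2)
      by (unfold det, dot, cross, lc, negV; simpl; ring).
    rewrite D. unfold det. fold E2. rewrite E2E2.
    assert (0 < cq*cq*cq) by (repeat apply Rmult_lt_0_compat; auto). lra. }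
  pose proof (KEY E1 E1E1 PE1) as N1. pose proof (KEY E2 E2E2 PE2) as N2. pose proof (KEY (negV E1) mE1 PmE1) as N3.
  fold q1 in N1. fold q2 in N2. fold q3 in N3.
  destruct (classic (fst (f (q2, m)) = negS2 (fst (f (q1, m))))) as [Hneg|Hneg].
  - apply (core f g Hgf Hfg Hgp n m q1 q3 q2 Hn); auto.
    + rewrite det_swap23. intro E; apply Hdet; lra.
    + intro E3. rewrite <- Hneg in E3.
      assert (Hq23 : q3 <> q2) by (intro E; rewrite E in Hdet; apply Hdet; apply det_rep23).
      apply (fst_neq_of f g Hgf Hfg Hgp q3 q2 m Hq23). auto.
  - apply (core f g Hgf Hfg Hgp n m q1 q2 q3 Hn); auto.
Qed.

Lemma C5 f g (Hgf : forall x, g (f x) = x) (Hfg : forall y, f (g y) = y) (Hgp : geodesic_preserving f) :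
  forall G, geodesic G -> vertical G -> vertical (image f G).
Proof.
  intros G HG [p Hv].
  destruct (geod_classify _ (Hgp G HG)) as [P [W [a [b [r [Hp HE]]]]]].
  pose proof Hp as [PP [WW [PW [Hab Ha]]]].
  assert (Ha0 : a = 0).
  { destruct (Req_dec a 0) as [|Hne]; auto. exfalso.
    assert (Hapos : 0 < a) by lra.
    set (y0 := (toS2 (lc (cos (a*0)) P (sin (a*0)) W), b*0+r)).
    set (y1 := (toS2 (lc (cos (a*(PI/(2*a)))) P (sin (a*(PI/(2*a)))) W), b*(PI/(2*a))+r)).
    assert (I0 : image f G y0) by (apply HE; apply onhel_pt; auto).
    assert (I1 : image f G y1) by (apply HE; apply onhel_pt; auto).
    assert (V0 : vS (fst y0) = P).
    { unfold y0; simpl. rewrite toS2_vS by (apply lc_unit; auto). rewrite Rmult_0_r, cos_0, sin_0, lc_10. reflexivity. }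
    assert (V1 : vS (fst y1) = W).
    { unfold y1; simpl. rewrite toS2_vS by (apply lc_unit; auto).
      replace (a*(PI/(2*a))) with (PI/2) by (field; lra). rewrite cos_PI2, sin_PI2.
      apply V3_ext; unfold lc; simpl; ring. }
    apply (img_iff f g Hgf Hfg) in I0. apply (img_iff f g Hgf Hfg) in I1.
    apply Hv in I0. apply Hv in I1.
    assert (X0 : g y0 = (p, snd (g y0))) by (rewrite <- I0; apply surjective_pairing).
    assert (X1 : g y1 = (p, snd (g y1))) by (rewrite <- I1; apply surjective_pairing).
    destruct (Req_dec (snd (g y0)) (snd (g y1))) as [Eh|Eh].
    - assert (g y0 = g y1) by (rewrite X0, X1, Eh; reflexivity).
      assert (y0 = y1) by (rewrite <- (Hfg y0), <- (Hfg y1), H; reflexivity).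
      rewrite H0, V1 in V0. rewrite V0 in PW. lra.
    - destruct (C4 f g Hgf Hfg Hgp p _ _ Eh) as [E|E];
      rewrite <- X0, <- X1, !Hfg in E.
      + rewrite E, V0 in V1. rewrite V1 in PW. lra.
      + assert (vS (fst y1) = negV (vS (fst y0))) by (rewrite E; apply vS_negS2).
        rewrite V0, V1 in H. rewrite H in PW.
        assert (dot P (negV P) = - dot P P) by (unfold dot, negV; simpl; ring). lra. }
  subst a.
  assert (Hb : b <> 0) by (intro; subst; lra).
  exists (toS2 P). intro y. rewrite HE. split.
  - intros [t [E1 _]]. apply S2_ext. rewrite toS2_vS by auto. rewrite E1, Rmult_0_l, cos_0, sin_0, lc_10. reflexivity.
  - intro E. exists ((snd y - r)/b). split.
    + rewrite Rmult_0_l, cos_0, sin_0, lc_10, E, toS2_vS; auto.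
    + field. auto.
Qed.

Definition Vline (p : S2) : M -> Prop := fun x => fst x = p.

Lemma geod_ext G G' : geodesic G -> (forall x, G x <-> G' x) -> geodesic G'.
Proof.
  intros [c [Hc HG]] E. exists c. split; auto. intro x. rewrite <- E. apply HG.
Qed.

Lemma Vline_geod p : geodesic (Vline p).
Proof.
  assert (PP : dot (vS p) (vS p) = 1) by (rewrite dot_vS; apply s2dot_self).
  destruct (perp_exists _ PP) as [W [WW PW]].
  apply (geod_ext (onhel (vS p) W 0 1 0)).
  { apply onhel_geod. repeat split; auto; lra. }
  intro x. unfold Vline. split.
  - intros [t [E1 _]]. apply S2_ext. rewrite E1, Rmult_0_l, cos_0, sin_0, lc_10. reflexivity.
  - intro E. exists (snd x). split; [|ring]. rewrite Rmult_0_l, cos_0, sin_0, lc_10, E. reflexivity.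
Qed.

Theorem lemma4p10 (f : M -> M) :
  bijection f -> geodesic_preserving f ->
  forall G : M -> Prop, geodesic G ->
    (horizontal G -> horizontal (image f G)) /\
    (vertical G -> vertical (image f G)) /\
    (slant G -> slant (image f G)).
Proof.
  intros [g [Hgf Hfg]] Hgp G HG. split; [|split].
  - apply (C1 f g Hgf Hfg Hgp).
  - apply (C5 f g Hgf Hfg Hgp G HG).
  - intros [_ [HnV HnH]]. split; [apply Hgp; auto|]. split.
    + intros [u Hu].
      set (w := g (u, 0)). set (p := fst w).
      assert (Vp : vertical (Vline p)) by (exists p; intro x; unfold Vline; tauto).
      destruct (C5 f g Hgf Hfg Hgp _ (Vline_geod p) Vp) as [u' Hu'].
      assert (Iw : image f (Vline p) (u, 0)).
      { apply (img_iff f g Hgf Hfg). unfold Vline. reflexivity. }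
      apply Hu' in Iw. simpl in Iw. subst u'.
      apply HnV. exists p. intro x.
      rewrite <- (Hgf x). rewrite <- (img_iff f g Hgf Hfg G (f x)). rewrite Hu.
      rewrite <- Hu'. rewrite (img_iff f g Hgf Hfg). rewrite !Hgf. unfold Vline. tauto.
    + apply (C3 f g Hgf Hfg Hgp G HG HnH).
Qed.
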